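(* Let $n\ge 2$, $PS$ be strictly proper, and let $k$ be an integer with $1\le k\le k_B$. Let $(\bar\beta_\ell,\bar\beta_h)\in\mathbb R^2$ satisfy $\bar\beta_\ell\le 1$, $\bar\beta_h\le 1$ and $\bar\beta_h+\frac{P(\ell\mid \ell)}{P(h\mid \ell)}\bar\beta_\ell\ge 1$. Then $u(\bar\beta_\ell,\bar\beta_h\mid \ell)\le u(\Sigma^*\mid \ell)$, with equality only when $(\bar\beta_\ell,\bar\beta_h)=(0,1)$.
   Context: Peer prediction setting with signals $\{\ell,h\}$ and a symmetric prior. $P(s\mid s')$ denotes the probability that another agent has signal $s$ given that one's own signal is $s'$, and $P_{s'}=P(\cdot\mid s')$. Standing assumptions: $P(h\mid h)>P(h\mid\ell)$, $P(h\mid\ell)>0$ and $P(\ell\mid h)>0$. $PS$ is a strictly proper scoring rule on $\{\ell,h\}$. For $\beta'\in\mathbb R$ and $(\beta_\ell,\beta_h)\in\mathbb R^2$, let $q=P(h\mid \ell)\beta_h+P(\ell\mid \ell)\beta_\ell$ and define $$f^\ell(\beta',(\beta_\ell,\beta_h))=\beta'\big[q\,PS(h,P_h)+(1-q)PS(\ell,P_h)\big]+(1-\beta')\big[q\,PS(h,P_\ell)+(1-q)PS(\ell,P_\ell)\big].$$ Define $$u(\bar\beta_\ell,\bar\beta_h\mid \ell)=\tfrac{n-k}{n-1}f^\ell(\bar\beta_\ell,(0,1))+\tfrac{k-1}{n-1}f^\ell(\bar\beta_\ell,(\bar\beta_\ell,\bar\beta_h)).$$ This is the interim utility of a signal-$\ell$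 deviator when $k$ deviators all play $(\bar\beta_\ell,\bar\beta_h)$, i.e. report $h$ with probability $\bar\beta_\ell$ given signal $\ell$ and with probability $\bar\beta_h$ given signal $h$, and the remaining $n-k$ agents report truthfully. The truthful interim utility is $u(\Sigma^*\mid \ell)=P(h\mid \ell)PS(h,P_\ell)+P(\ell\mid \ell)PS(\ell,P_\ell)$. $k_B=\min(k_B^h,k_B^\ell,n)$, where $k_B^h=\lceil (n-1)\mathbb E_{s\sim P_\ell}[PS(s,P_\ell)-PS(s,P_h)]/(P(\ell\mid\ell)(PS(h,P_h)-PS(\ell,P_h)))\rceil$ if $PS(h,P_h)>PS(\ell,P_h)$ and $k_B^h=n$ otherwise; and $k_B^\ell=\lceil (n-1)\mathbb E_{s\sim P_h}[PS(s,P_h)-PS(s,P_\ell)]/(P(h\mid h)(PS(\ell,P_\ell)-PS(h,P_\ell)))\rceil$ if $PS(\ell,P_\ell)>PS(h,P_\ell)$ and $k_B^\ell=n$ otherwise. *)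

(* Defs.v *)
(* R : realType (an archimedean real field, so Num.ceil exists). *)
From mathcomp Require Import all_boot all_order all_algebra.
From mathcomp Require Import reals.
Set Implicit Arguments. Unset Strict Implicit. Unset Printing Implicit Defensive.
Import Order.TTheory GRing.Theory Num.Theory.
Local Open Scope ring_scope.

Inductive signal := sl | sh.

Section PeerPrediction.
Variable R : realType.

(* A distribution on {ell,h} is represented by its probability of h, in [0,1]. *)
Definition expect (p : R) (g : signal -> R) : R := p * g sh + (1 - p) * g sl.

Definition strictly_proper (PS : signal -> R -> R) : Prop :=
  forall p q : R, 0 <= p <= 1 -> 0 <= q <= 1 -> p != q ->
    expect p (fun s => PS s q) < expect p (fun s => PS s p).

(* phl = P(h|ell) (so P_ell = phl), phh = P(h|h) (so P_h = phh),
   P(ell|ell) = 1 - phl, P(ell|h) = 1 - phh. *)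

Definition f_ell (PS : signal -> R -> R) (phl phh : R) (b' bl bh : R) : R :=
  let q := phl * bh + (1 - phl) * bl in
  b' * (q * PS sh phh + (1 - q) * PS sl phh)
  + (1 - b') * (q * PS sh phl + (1 - q) * PS sl phl).

Definition u_dev (PS : signal -> R -> R) (phl phh : R) (n k : nat) (bl bh : R) : R :=
  (n%:R - k%:R) / (n%:R - 1) * f_ell PS phl phh bl 0 1
  + (k%:R - 1) / (n%:R - 1) * f_ell PS phl phh bl bl bh.

Definition u_truth (PS : signal -> R -> R) (phl : R) : R :=
  phl * PS sh phl + (1 - phl) * PS sl phl.

Definition kB_h (PS : signal -> R -> R) (phl phh : R) (n : nat) : int :=
  if PS sl phh < PS sh phh then
    Num.ceil ((n%:R - 1) * expect phl (fun s => PS s phl - PS s phh)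
              / ((1 - phl) * (PS sh phh - PS sl phh)))
  else n%:Z.

Definition kB_l (PS : signal -> R -> R) (phl phh : R) (n : nat) : int :=
  if PS sh phl < PS sl phl then
    Num.ceil ((n%:R - 1) * expect phh (fun s => PS s phh - PS s phl)
              / (phh * (PS sl phl - PS sh phl)))
  else n%:Z.

Definition kB (PS : signal -> R -> R) (phl phh : R) (n : nat) : int :=
  Order.min (Order.min (kB_h PS phl phh n) (kB_l PS phl phh n)) n%:Z.

End PeerPrediction.

(* Main.v *)
Require Import Defs.
From mathcomp Require Import all_boot all_order all_algebra.
From mathcomp Require Import reals.
From mathcomp Require Import ring lra zify.
Import Order.TTheory GRing.Theory Num.Theory.
Local Open Scope ring_scope.

Theorem lemma2 (R : realType) (phl phh : R) (PS : signal -> R -> R)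
    (n k : nat) (bl bh : R) :
  0 < phl -> phl < phh -> phh < 1 ->
  strictly_proper PS ->
  (2 <= n)%N ->
  (1 <= k)%N -> (k%:Z <= kB PS phl phh n) ->
  bl <= 1 -> bh <= 1 -> 1 <= bh + (1 - phl) / phl * bl ->
  u_dev PS phl phh n k bl bh <= u_truth PS phl /\
  (u_dev PS phl phh n k bl bh = u_truth PS phl -> bl = 0 /\ bh = 1).
Proof.
move=> p0 pr r1 SP n2 k1 hk bl1 bh1 hc.
set p := phl in p0 pr hk hc *; set r := phh in pr r1 hk *.
set a := PS sh r; set b := PS sl r; set c := PS sh p; set d := PS sl p.
have H1 := SP p r ltac:(lra) ltac:(lra) (negbT (lt_eqF pr)).
have H2 := SP r p ltac:(lra) ltac:(lra) (negbT (gt_eqF pr)).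
rewrite /expect -/a -/b -/c -/d in H1 H2.
set D := p * c + (1 - p) * d - (p * a + (1 - p) * b).
have D0 : 0 < D by rewrite /D; lra.
have XY : c - d < a - b.
  have : 0 < (r - p) * ((a - b) - (c - d)) by rewrite /D in D0; nra.
  rewrite pmulr_rgt0; last by lra. lra.
have blp : 0 <= bl.
  have : 0 <= (1 - p) / p * bl by lra.
  by rewrite pmulr_rge0 // divr_gt0 //; lra.
have hq : p <= p * bh + (1 - p) * bl.
  have : p * 1 <= p * (bh + (1 - p) / p * bl) by rewrite ler_pM2l.
  rewrite mulrDr mulrA (mulrC p) mulrCA divff ?mulr1; [lra | exact: lt0r_neq0].
set N := n%:R : R. set K := k%:R : R.
have N2 : 2 <= N by rewrite /N (ler_nat R 2 n).
have K1 : 1 <= K by rewrite /K (ler_nat R 1 k).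
set q := p * bh + (1 - p) * bl.
(* key bound: (K-1)(q-p)(bl X + (1-bl)Y) <= (K-1)(1-p) bl max(X,0), and <  (N-1) D bl for bl>0 *)
have key : (K - 1) * (q - p) * (bl * (a - b) + (1 - bl) * (c - d)) <= (N - 1) * D * bl
   /\ (0 < bl -> (K - 1) * (q - p) * (bl * (a - b) + (1 - bl) * (c - d)) < (N - 1) * D * bl).
  have br : bl * (a - b) + (1 - bl) * (c - d) <= a - b.
    have : 0 <= (1 - bl) * ((a - b) - (c - d)) by apply: mulr_ge0; lra.
    lra.
  have qp : 0 <= q - p.
    by rewrite /q; lra.
  have qp2 : q - p <= (1 - p) * bl.
    have : p * (bh - 1) <= 0 by rewrite mulr_ge0_le0; lra.
    rewrite /q; lra.
  have Kp : 0 <= K - 1 by lra.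
  have A1 : (K - 1) * (q - p) * (bl * (a - b) + (1 - bl) * (c - d)) <= (K - 1) * (q - p) * (a - b).
    by apply: ler_wpM2l => //; apply: mulr_ge0.
  case: (lerP (a - b) 0) => X0.
    have : (K - 1) * (q - p) * (a - b) <= 0.
      by rewrite mulr_ge0_le0 //; apply: mulr_ge0.
    move=> T0.
    have : 0 <= (N - 1) * D * bl by apply: mulr_ge0 => //; apply: mulr_ge0; lra.
    split; first by lra.
    move=> bp; have : 0 < (N - 1) * D * bl by apply: mulr_gt0 => //; apply: mulr_gt0 => //; lra.
    lra.
  have hkh : k%:Z <= kB_h PS p r n.
    by move: hk; rewrite /kB !le_min => /andP[/andP[]].
  move: hkh; rewrite /kB_h -/a -/b ifT; last by lra.
  rewrite /expect -/a -/b -/c -/d.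
  set z := (_ / _) => hz.
  have : ((k%:Z - 1)%:~R < z).
    rewrite -ceil_gt_int ltrBlDr; apply: (le_lt_trans hz); by rewrite ltrDl.
  rewrite rmorphB /= -/K => kz.
  have den : 0 < (1 - p) * (a - b) by apply: mulr_gt0; lra.
  move: kz; rewrite /z ltr_pdivlMr // => kz.
  have eD : p * (c - a) + (1 - p) * (d - b) = D by rewrite /D; ring.
  rewrite eD in kz.
  have {}kz : (K - 1) * ((1 - p) * (a - b)) < (N - 1) * D := kz.
  have A2 : (K - 1) * (q - p) * (a - b) <= (K - 1) * ((1 - p) * bl) * (a - b).
    by apply: ler_wpM2r; [lra | apply: ler_wpM2l].
  have e3 : (K - 1) * ((1 - p) * bl) * (a - b) = bl * ((K - 1) * ((1 - p) * (a - b))) by ring.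
  have e4 : (N - 1) * D * bl = bl * ((N - 1) * D) by ring.
  rewrite e3 in A2; rewrite e4.
  split.
    have := ler_wpM2l blp (ltW kz); lra.
  move=> bp; have : bl * ((K - 1) * ((1 - p) * (a - b))) < bl * ((N - 1) * D) by rewrite ltr_pM2l.
  lra.
have eq : (u_dev PS p r n k bl bh - u_truth PS p) * (N - 1) =
   - ((N - 1) * D * bl) + (K - 1) * (q - p) * (bl * (a - b) + (1 - bl) * (c - d)).
  rewrite /u_dev /u_truth /f_ell -/a -/b -/c -/d -/N -/K /D /q.
  field; lra.
have N1 : 0 < N - 1 by lra.
case: key => k1' k2'.
split.
  have : (u_dev PS p r n k bl bh - u_truth PS p) * (N - 1) <= 0 by rewrite eq; lra.
  by rewrite pmulr_lle0 //; lra.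
move=> E.
have bl0 : bl = 0.
  apply/eqP; rewrite eq_le blp andbT; rewrite leNgt; apply/negP => bp.
  have := k2' bp; move: eq; rewrite E subrr mul0r; lra.
split=> //.
move: hq; rewrite /q bl0 mulr0 addr0 => hq.
have : p * 1 <= p * bh by lra.
rewrite ler_pM2l // => ?; lra.
Qed.
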